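(* Let $W^{(1)}$ be a pro-$p$ Coxeter group and $\mathcal H^{(1)}=\mathcal H^{(1)}_R(a,b)$ a generic pro-$p$ Hecke algebra over a commutative ring $R$ (notation as in the context), and assume that all $a_s$ ($s\in S$) are units of $R$ (so that every $T_w$ is invertible in $\mathcal H^{(1)}$). Let $\mathfrak A(W^{(1)})$ be the group with generators $\{T_w\}_{w\in W^{(1)}}$ and relations $T_{ww'}=T_wT_{w'}$ whenever $\ell(ww')=\ell(w)+\ell(w')$, and let $\mathfrak a$ be the two-sided ideal of the group algebra $R[\mathfrak A(W^{(1)})]$ generated by $T_{n_s}^2-a_sT_{n_s^2}-T_{n_s}b_s$, $s\in S$ (with $b_s=\sum_tc_tt$ read as $\sum_tc_tT_t$). Then the homomorphism \[ \varphi:R[\mathfrak A(W^{(1)})]/\mathfrak a\longrightarrow\mathcal H^{(1)} \] induced by $T_w\mapsto T_w$ is well defined and is an isomorphism of $R$-algebras.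
   Context: Coxeter group $(W_{\mathrm{aff}},S)$ with length $\ell$, $m(s,t)$ the order of $st$. Extended Coxeter group: $W=W_{\mathrm{aff}}\rtimes\Omega$, $(W_{\mathrm{aff}},S)$ Coxeter, $\Omega$ preserving $S$ under conjugation; $\ell(wu)=\ell(w)$ for $w\in W_{\mathrm{aff}},u\in\Omega$. Pro-$p$ Coxeter group: extension $1\to T\to W^{(1)}\xrightarrow{\pi}W\to1$ with $T$ abelian, $T\subseteq W^{(1)}$, lifts $n_s\in\pi^{-1}(s)$ satisfying braid relations ($m(s,t)$ alternating factors) when $m(s,t)<\infty$; length on $W^{(1)}$ is $\ell\circ\pi$; $W^{(1)}$ acts on $T$ and $R[T]$ by conjugation. Generic pro-$p$ Hecke algebra: given $a_s\in R$, $b_s\in R[T]$ such that $a_s=a_t$ and $(n_swn_t^{-1}w^{-1})w(b_t)=b_s$ whenever $s,t\in S$, $w\in W^{(1)}$, $s\pi(w)=\pi(w)t$, $\mathcal H^{(1)}_R(a,b)$ is the unique $R$-algebra free as $R$-module on $\{T_w\}_{w\in W^{(1)}}$ with $T_{ww'}=T_wT_{w'}$ when $\ell(ww')=\ell(w)+\ell(w')$ and $T_{n_s}^2=a_sT_{n_s^2}+T_{n_s}b_s$, $R[T]$ embedded via $t\mapsto T_t$. *)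

(* Defs.v *)
From HB Require Import structures.
From mathcomp Require Import all_boot all_algebra.
From mathcomp Require Import monoid.

Set Implicit Arguments.
Unset Strict Implicit.
Unset Printing Implicit Defensive.

Import GRing.Theory.

Definition wprod (G : groupType) (l : seq G) : G := (\prod_(x <- l) x)%g.

Definition ghom (G K : groupType) (f : G -> K) : Prop :=
  forall x y : G, f (x * y)%g = (f x * f y)%g.

Definition subgroup (G : groupType) (H : pred G) : Prop :=
  H 1%g /\ (forall x y, H x -> H y -> H (x * y)%g) /\ (forall x, H x -> H x^-1%g).

Definition has_order (G : groupType) (x : G) (m : nat) : Prop :=
  (0 < m)%N /\ (x ^+ m)%g = 1%g /\ (forall k, (0 < k < m)%N -> (x ^+ k)%g <> 1%g).

Definition alt_prod (G : groupType) (x y : G) (m : nat) : G :=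
  (\prod_(i < m) (if odd i then y else x))%g.

(* (Waff, S) is a Coxeter system: S is a set of involutions in Waff
   generating Waff, and Waff is presented by the generators S and the
   relations (st)^{m(s,t)} = 1 for m(s,t) = order of st finite
   (s^2 = 1 is the case s = t).  The presentation is expressed by its
   universal property: every assignment of S into a group satisfying the
   relations extends to a homomorphism on Waff. *)
Definition coxeter_system (W : groupType) (Waff S : pred W) : Prop :=
  [/\ subgroup Waff,
      (forall s, S s -> Waff s /\ s <> 1%g /\ (s * s)%g = 1%g),
      (forall w, Waff w -> exists l : seq W, all S l /\ w = wprod l) &
      (forall (K : groupType) (f : W -> K),
          (forall s t m, S s -> S t -> has_order (s * t)%g m ->
               ((f s * f t) ^+ m)%g = 1%g) ->
          exists g : W -> K,
            (forall x y, Waff x -> Waff y -> g (x * y)%g = (g x * g y)%g) /\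
            (forall s, S s -> g s = f s))].

Definition is_coxeter_length (W : groupType) (Waff S : pred W) (len : W -> nat)
  : Prop :=
  forall w, Waff w ->
    (exists l : seq W, all S l /\ w = wprod l /\ size l = len w) /\
    (forall l : seq W, all S l -> w = wprod l -> (len w <= size l)%N).

(* Extended Coxeter group  W = Waff ⋊ Ω  (internal semidirect product),
   with length ℓ(w u) = ℓ(w) for w ∈ Waff, u ∈ Ω. *)
Record extended_coxeter (W : groupType) (Waff Om S : pred W) (len : W -> nat)
  : Prop := {
  ec_coxeter : coxeter_system Waff S;
  ec_normal : forall x g, Waff x -> Waff (x ^ g)%g;
  ec_Om : subgroup Om;
  ec_inter : forall x, Waff x -> Om x -> x = 1%g;
  ec_prod : forall g, exists x u, Waff x /\ Om u /\ g = (x * u)%g;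
  ec_OmS : forall u s, Om u -> S s -> S (s ^ u)%g;
  ec_len_aff : is_coxeter_length Waff S len;
  ec_len_Om : forall w u, Waff w -> Om u -> len (w * u)%g = len w
}.

(* Pro-p Coxeter group: extension 1 -> T -> W1 -> W -> 1 with T = ker pi
   abelian, and lifts n_s of s in S satisfying the braid relations. *)
Record prop_coxeter (W : groupType) (S : pred W) (W1 : groupType)
  (pi : W1 -> W) (n : W -> W1) : Prop := {
  pc_hom : ghom pi;
  pc_surj : forall w, exists x, pi x = w;
  pc_T_abelian : forall x y, pi x = 1%g -> pi y = 1%g -> (x * y)%g = (y * x)%g;
  pc_lift : forall s, S s -> pi (n s) = s;
  pc_braid : forall s t m, S s -> S t -> has_order (s * t)%g m ->
      alt_prod (n s) (n t) m = alt_prod (n t) (n s) m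
}.

(* An element of R[G] is represented by a finite list of pairs (c, g),
   standing for  sum c g ; two lists represent the same element iff
   they have the same coefficient function. *)
Definition coef (R : pzRingType) (G : groupType) (l : seq (R * G)) (g : G) : R :=
  (\sum_(p <- l | p.2 == g) p.1)%R.

Definition gmul (R : pzRingType) (G : groupType) (l1 l2 : seq (R * G))
  : seq (R * G) :=
  [seq ((p.1 * q.1)%R, (p.2 * q.2)%g) | p <- l1, q <- l2].

(* membership in the two-sided ideal of R[G] generated by {gen i | P i}:
   f is (coefficientwise) a finite sum of terms x * gen i * y *)
Definition in_ideal (R : pzRingType) (G : groupType) (I : eqType) (P : I -> Prop)
  (gen : I -> seq (R * G)) (f : seq (R * G)) : Prop :=
  exists l : seq (seq (R * G) * I * seq (R * G)),
    (forall e, e \in l -> P e.1.2) /\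
    coef f =1 coef (flatten [seq gmul (gmul e.1.1 (gen e.1.2)) e.2 | e <- l]).

(* Conditions on the parameters a_s ∈ R, b_s ∈ R[T] (b_s given as a
   formal combination of elements of T = ker pi). *)
Definition hecke_params (R : pzRingType) (W : groupType) (S : pred W)
  (W1 : groupType) (pi : W1 -> W) (n : W -> W1)
  (a : W -> R) (b : W -> seq (R * W1)) : Prop :=
  (forall s, S s -> forall p, p \in b s -> pi p.2 = 1%g) /\
  (forall s t (w : W1), S s -> S t -> (s * pi w)%g = (pi w * t)%g ->
     a s = a t /\
     coef (b s) =1
       coef [seq (p.1, ((n s * w * (n t)^-1 * w^-1) * (w * p.2 * w^-1))%g)
            | p <- b t]).

Definition is_hecke_algebra (R : comPzRingType) (W : groupType) (S : pred W)
  (len : W -> nat) (W1 : groupType) (pi : W1 -> W) (n : W -> W1)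
  (a : W -> R) (b : W -> seq (R * W1)) (H : algType R) (Th : W1 -> H) : Prop :=
  [/\
      (forall (l : seq W1) (c : W1 -> R), uniq l ->
          (\sum_(w <- l) c w *: Th w)%R = 0%R -> forall w, w \in l -> c w = 0%R),
      (forall h : H, exists (l : seq W1) (c : W1 -> R),
          h = (\sum_(w <- l) c w *: Th w)%R),
      (forall w w', len (pi (w * w')%g) = (len (pi w) + len (pi w'))%N ->
          Th (w * w')%g = (Th w * Th w')%R) &
      (forall s, S s ->
          (Th (n s) * Th (n s))%R =
          (a s *: Th (n s * n s)%g + Th (n s) * \sum_(p <- b s) p.1 *: Th p.2)%R)].

(* A with tau : W1 -> A is the group with generators {T_w} and relations
   T_{ww'} = T_w T_{w'} whenever ℓ(ww') = ℓ(w) + ℓ(w'), ℓ = len ∘ pi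
   (expressed by generation + universal property of the presentation). *)
Definition is_braid_group (W : groupType) (len : W -> nat) (W1 : groupType)
  (pi : W1 -> W) (A : groupType) (tau : W1 -> A) : Prop :=
  [/\ (forall w w', len (pi (w * w')%g) = (len (pi w) + len (pi w'))%N ->
          tau (w * w')%g = (tau w * tau w')%g),
      (forall x : A, exists l : seq (bool * W1),
          x = wprod [seq (if e.1 then (tau e.2)^-1 else tau e.2)%g | e <- l]) &
      (forall (K : groupType) (f : W1 -> K),
          (forall w w', len (pi (w * w')%g) = (len (pi w) + len (pi w'))%N ->
              f (w * w')%g = (f w * f w')%g) ->
          exists g : A -> K, ghom g /\ forall w, g (tau w) = f w)].

Definition quad_gen (R : pzRingType) (W W1 A : groupType) (n : W -> W1)
  (a : W -> R) (b : W -> seq (R * W1)) (tau : W1 -> A) (s : W)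
  : seq (R * A) :=
  [:: (1%R, (tau (n s) * tau (n s))%g); ((- a s)%R, tau (n s * n s)%g)] ++
  [seq ((- p.1)%R, (tau (n s) * tau p.2)%g) | p <- b s].

Definition lin_ext (R : comPzRingType) (A : groupType) (H : algType R)
  (iota : A -> H) (f : seq (R * A)) : H :=
  (\sum_(p <- f) p.1 *: iota p.2)%R.

(* Main.v *)
Require Import Defs.
From HB Require Import structures.
From mathcomp Require Import all_boot all_algebra.
From mathcomp Require Import monoid.
From mathcomp Require Import ring zify.
Set Implicit Arguments.
Unset Strict Implicit.
Unset Printing Implicit Defensive.
Import GRing.Theory.


Section Lists.
Variables (R : comPzRingType) (G : groupType).
Local Open Scope ring_scope.
Implicit Types (f g l : seq (R * G)).

Definition negl l : seq (R * G) := [seq (- p.1, p.2) | p <- l].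

Lemma coef_nil (x : G) : coef ([::] : seq (R * G)) x = 0 :> R.
Proof. by rewrite /coef big_nil. Qed.

Lemma coef_cons c y l x :
  coef ((c, y) :: l) x = (if y == x then c else 0) + coef l x.
Proof. by rewrite /coef big_cons /=; case: eqP => _; rewrite ?add0r. Qed.

Lemma coef_cat l1 l2 x : coef (l1 ++ l2) x = coef l1 x + coef l2 x.
Proof. by rewrite /coef big_cat. Qed.

Lemma coef_neg l x : coef (negl l) x = - coef l x.
Proof. by rewrite /coef big_map /= sumrN. Qed.

Lemma coef_flatten (L : seq (seq (R * G))) x :
  coef (flatten L) x = \sum_(l <- L) coef l x.
Proof. by rewrite /coef big_flatten. Qed.

Lemma gmul1l c y f :
  gmul [:: (c, y)] f = [seq (c * q.1, (y * q.2)%g) | q <- f].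
Proof. by rewrite /gmul allpairs1l. Qed.

Lemma gmul1r c y f :
  gmul f [:: (c, y)] = [seq (p.1 * c, (p.2 * y)%g) | p <- f].
Proof. by rewrite /gmul allpairs1r. Qed.

Lemma coef_gmul1l c y f x :
  coef (gmul [:: (c, y)] f) x = c * coef f (y^-1 * x)%g.
Proof.
rewrite gmul1l /coef big_map mulr_sumr; apply: eq_big => q //=.
apply/eqP/eqP => [<-|->]; by rewrite ?mulKg ?mulVKg.
Qed.

Lemma coef_gmul1r c y f x :
  coef (gmul f [:: (c, y)]) x = coef f (x * y^-1)%g * c.
Proof.
rewrite gmul1r /coef big_map mulr_suml; apply: eq_big => q //=.
apply/eqP/eqP => [<-|->]; by rewrite ?mulgK ?mulgVK.
Qed.

Lemma gmulA1l (q : R * G) (X Z : seq (R * G)) : gmul [:: q] (gmul X Z) = gmul (gmul [:: q] X) Z.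
Proof.
case: q => c y; rewrite !gmul1l /gmul map_allpairs allpairs_mapl.
by apply: eq_allpairs => p r /=; rewrite mulrA mulgA.
Qed.

Lemma gmulA1r (q : R * G) (X Z : seq (R * G)) : gmul (gmul X Z) [:: q] = gmul X (gmul Z [:: q]).
Proof.
case: q => c y; rewrite !gmul1r /gmul map_allpairs allpairs_mapr.
by apply: eq_allpairs => p r /=; rewrite mulrA mulgA.
Qed.

Section Ideal.
Variables (I : eqType) (P : I -> Prop) (gen : I -> seq (R * G)).
Definition J f := in_ideal P gen f.

Lemma J_eq f g : J f -> coef f =1 coef g -> J g.
Proof. by move=> [l [hl hc]] e; exists l; split=> // x; rewrite -e hc. Qed.

Lemma J_zero f : coef f =1 (fun _ => 0) -> J f.
Proof. by move=> h; exists [::]; split=> // x; rewrite h /= coef_nil. Qed.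

Lemma J_cat f g : J f -> J g -> J (f ++ g).
Proof.
move=> [l1 [hl1 hc1]] [l2 [hl2 hc2]]; exists (l1 ++ l2); split.
  by move=> e; rewrite mem_cat => /orP[]; [apply: hl1 | apply: hl2].
by move=> x; rewrite coef_cat hc1 hc2 map_cat flatten_cat coef_cat.
Qed.

Lemma J_gen i : P i -> J (gen i).
Proof.
move=> hi; exists [:: ([:: (1, 1%g)], i, [:: (1, 1%g)])]; split.
  by move=> e; rewrite inE => /eqP ->.
move=> x /=; rewrite cats0 coef_gmul1r coef_gmul1l.
by rewrite invg1 mulg1 mul1g mulr1 mul1r.
Qed.

Lemma J_mull c y f : J f -> J (gmul [:: (c, y)] f).
Proof.
move=> [l [hl hc]].
exists [seq (gmul [:: (c, y)] e.1.1, e.1.2, e.2) | e <- l]; split.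
  by move=> e /mapP [e' he' ->] /=; exact: hl he'.
move=> x; rewrite coef_gmul1l hc !coef_flatten !big_map mulr_sumr.
by apply: eq_bigr => e _; rewrite -coef_gmul1l !gmulA1l.
Qed.

Lemma J_mulr c y f : J f -> J (gmul f [:: (c, y)]).
Proof.
move=> [l [hl hc]].
exists [seq (e.1.1, e.1.2, gmul e.2 [:: (c, y)]) | e <- l]; split.
  by move=> e /mapP [e' he' ->] /=; exact: hl he'.
move=> x; rewrite coef_gmul1r hc !coef_flatten !big_map mulr_suml.
by apply: eq_bigr => e _; rewrite -coef_gmul1r !gmulA1r.
Qed.
End Ideal.

Section Lin.
Variables (H : algType R) (F : G -> H).

Lemma lin_nil : lin_ext F [::] = 0.
Proof. by rewrite /lin_ext big_nil. Qed.

Lemma lin_cons c y l : lin_ext F ((c, y) :: l) = c *: F y + lin_ext F l.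
Proof. by rewrite /lin_ext big_cons. Qed.

Lemma lin_cat l1 l2 : lin_ext F (l1 ++ l2) = lin_ext F l1 + lin_ext F l2.
Proof. by rewrite /lin_ext big_cat. Qed.

Lemma lin_flatten (L : seq (seq (R * G))) :
  lin_ext F (flatten L) = \sum_(l <- L) lin_ext F l.
Proof. by rewrite /lin_ext big_flatten. Qed.

Lemma lin_gmul (hF : forall x y, F (x * y)%g = F x * F y) l1 l2 :
  lin_ext F (gmul l1 l2) = lin_ext F l1 * lin_ext F l2.
Proof.
rewrite /lin_ext /gmul big_allpairs_dep mulr_suml; apply: eq_bigr => p _.
rewrite mulr_sumr; apply: eq_bigr => q _ /=.
by rewrite hF -scalerAl -scalerAr scalerA.
Qed.

Lemma lin_coef (K : seq G) l : uniq K -> (forall p, p \in l -> p.2 \in K) ->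
  lin_ext F l = \sum_(x <- K) coef l x *: F x.
Proof.
move=> uK; elim: l => [|[c y] l IH] hl.
  by rewrite lin_nil big1 // => x _; rewrite coef_nil scale0r.
rewrite lin_cons IH; last by move=> p hp; apply: hl; rewrite inE hp orbT.
have yK : y \in K by apply: (hl (c, y)); rewrite inE eqxx.
under [in RHS]eq_bigr => x _ do rewrite coef_cons scalerDl.
rewrite big_split /=; congr (_ + _).
rewrite (bigD1_seq y) //= eqxx big1 ?addr0 // => x hx.
by rewrite eq_sym (negbTE hx) scale0r.
Qed.

Lemma lin_coef_eq l l' : coef l =1 coef l' -> lin_ext F l = lin_ext F l'.
Proof.
move=> e; set K := undup [seq p.2 | p <- l ++ l'].
have hK : forall p, p \in l ++ l' -> p.2 \in K.
  by move=> p hp; rewrite mem_undup; apply: map_f.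
rewrite (@lin_coef K l) ?undup_uniq; last by move=> p hp; apply: hK; rewrite mem_cat hp.
rewrite (@lin_coef K l') ?undup_uniq; last by move=> p hp; apply: hK; rewrite mem_cat hp orbT.
- by apply: eq_bigr => x _; rewrite e.
all: by [].
Qed.

End Lin.

Lemma sum_coef (K : seq G) (Pr : pred G) l : uniq K -> (forall p, p \in l -> p.2 \in K) ->
  \sum_(p <- l | Pr p.2) p.1 = \sum_(x <- K | Pr x) coef l x.
Proof.
move=> uK; elim: l => [|[c y] l IH] hl.
  by rewrite big_nil big1 // => x _; rewrite coef_nil.
rewrite big_cons IH; last by move=> p hp; apply: hl; rewrite inE hp orbT.
have yK : y \in K by apply: (hl (c, y)); rewrite inE eqxx.
under [in RHS]eq_bigr => x _ do rewrite coef_cons.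
rewrite big_split /=.
have -> : \sum_(x <- K | Pr x) (if y == x then c else 0) = if Pr y then c else 0.
  rewrite big_mkcond (bigD1_seq y) //= eqxx big1 ?addr0.
    by case: (Pr y).
  by move=> x hx; rewrite eq_sym (negbTE hx); case: (Pr x).
by case: (Pr y); rewrite ?add0r.
Qed.
End Lists.


Section Units.
Variable V : pzRingType.
Definition unitP (x : V * V) : bool := (x.1 * x.2 == 1)%R && (x.2 * x.1 == 1)%R.
Definition UT := {x : V * V | unitP x}.
HB.instance Definition _ := Choice.on UT.
Lemma unit1P : unitP (1, 1)%R. Proof. by rewrite /unitP /= mulr1 eqxx. Qed.
Definition ut1 : UT := exist (fun x => unitP x) (1,1)%R unit1P.
Lemma utmulP (x y : UT) : unitP ((sval x).1 * (sval y).1, (sval y).2 * (sval x).2)%R.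
Proof.
case: x => [[a a'] hx]; case: y => [[b b'] hy] /=.
move: hx hy => /andP[/eqP h1 /eqP h2] /andP[/eqP h3 /eqP h4].
by rewrite /unitP /= mulrA -(mulrA a) h3 mulr1 h1 -(mulrA b') (mulrA a') h2 mul1r h4 !eqxx.
Qed.
Definition utmul (x y : UT) : UT := exist (fun x => unitP x) _ (utmulP x y).
Lemma utinvP (x : UT) : unitP ((sval x).2, (sval x).1).
Proof. by case: x => [[a a'] h]; rewrite /unitP /= andbC. Qed.
Definition utinv (x : UT) : UT := exist (fun x => unitP x) _ (utinvP x).
Lemma ut_eq (x y : UT) : sval x = sval y -> x = y.
Proof. by move=> h; apply: val_inj. Qed.
Lemma utA : associative utmul.
Proof. by move=> x y z; apply: ut_eq => /=; rewrite !mulrA. Qed.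
Lemma ut1m : left_id ut1 utmul.
Proof. by move=> x; apply: ut_eq; case: x => [[a b] ?] /=; rewrite mul1r mulr1. Qed.
Lemma utm1 : right_id ut1 utmul.
Proof. by move=> x; apply: ut_eq; case: x => [[a b] ?] /=; rewrite mul1r mulr1. Qed.
Lemma utVm : left_inverse ut1 utinv utmul.
Proof. by move=> x; apply: ut_eq; case: x => [[a b] h] /=; move: h => /andP[/eqP /= h1 /eqP /= h2]; rewrite ?h1 ?h2. Qed.
Lemma utmV : right_inverse ut1 utinv utmul.
Proof. by move=> x; apply: ut_eq; case: x => [[a b] h] /=; move: h => /andP[/eqP /= h1 /eqP /= h2]; rewrite ?h1 ?h2. Qed.
HB.instance Definition _ := isGroup.Build UT utA ut1m utm1 utVm utmV.
Lemma ut_val1 : sval (1%g : UT) = (1, 1)%R. Proof. by []. Qed.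
Lemma ut_valM (x y : UT) : sval (x * y)%g = ((sval x).1 * (sval y).1, (sval y).2 * (sval x).2)%R.
Proof. by []. Qed.
End Units.

Lemma wprod_nil (G : groupType) : wprod ([::] : seq G) = 1%g.
Proof. by rewrite /wprod big_nil. Qed.
Lemma wprod_cons (G : groupType) (x : G) l : wprod (x :: l) = (x * wprod l)%g.
Proof. by rewrite /wprod big_cons. Qed.

Lemma ghom1 (G K : groupType) (f : G -> K) : ghom f -> f 1%g = 1%g.
Proof. by move=> h; apply: (@mulIg _ (f 1%g)); rewrite -h !mul1g. Qed.
Lemma ghomV (G K : groupType) (f : G -> K) x : ghom f -> f x^-1%g = (f x)^-1%g.
Proof.
move=> h; apply: (@mulIg _ (f x)); rewrite -h mulVg ghom1 // mulVg //.
Qed.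

Section Coxeter.
Variables (W : groupType) (Waff Om S : pred W) (len : W -> nat).
Hypothesis HW : extended_coxeter Waff Om S len.

Let sub := (ec_coxeter HW).
Lemma Waff1 : Waff 1%g. Proof. by case: sub => [[]]. Qed.
Lemma WaffM x y : Waff x -> Waff y -> Waff (x * y)%g. Proof. by case: sub => [[_ []]]; auto. Qed.
Lemma WaffV x : Waff x -> Waff x^-1%g. Proof. by case: sub => [[_ []]]; auto. Qed.
Lemma S_prop s : S s -> [/\ Waff s, s <> 1%g & (s * s)%g = 1%g].
Proof. by case: sub => _ h _ _ hs; case: (h s hs) => [? []]. Qed.
Lemma SV s : S s -> s^-1%g = s.
Proof. by move=> /S_prop [_ _ h]; apply: mulg1_eq. Qed.

Lemma wprod_in l : all S l -> Waff (wprod l).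
Proof.
elim: l => [|x l IH]; first by rewrite wprod_nil Waff1.
by rewrite wprod_cons /= => /andP[hx hl]; apply: WaffM; [case: (S_prop hx)| apply: IH].
Qed.

Lemma red x : Waff x -> exists l, [/\ all S l, x = wprod l & size l = len x].
Proof. by move=> hx; case: (ec_len_aff HW hx) => [[l [h1 [h2 h3]]] _]; exists l. Qed.
Lemma len_le x l : Waff x -> all S l -> x = wprod l -> len x <= size l.
Proof. by move=> hx; case: (ec_len_aff HW hx) => _ h; apply: h. Qed.

Lemma len1 : len 1%g = 0.
Proof. by apply/eqP; rewrite -leqn0; apply: (@len_le _ [::]) => //; [apply: Waff1 | rewrite wprod_nil]. Qed.

Lemma len0 x : Waff x -> len x = 0 -> x = 1%g.
Proof.
move=> hx h; case: (red hx) => l [_ ex e]; case: l ex e => [|y l] ex e; first by rewrite ex wprod_nil.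
by rewrite h in e.
Qed.

Lemma lenS_le s x : S s -> Waff x -> len (s * x)%g <= (len x).+1.
Proof.
move=> hs hx; case: (red hx) => l [hl -> <-].
have hs' := hs; case/S_prop: hs' => hsw _ _.
apply: (@len_le _ (s :: l)); rewrite ?wprod_cons //=; last by rewrite hs hl.
by apply: WaffM => //; apply: wprod_in.
Qed.

Lemma sig1P : @unitP int ((-1)%R, (-1)%R). Proof. by []. Qed.
Definition sig1 : UT int := exist (fun x => unitP x) _ sig1P.
Lemma sig1_neq : sig1 <> 1%g.
Proof. by move=> /(f_equal sval). Qed.
Lemma sig1_sq : (sig1 * sig1)%g = 1%g.
Proof. by apply: val_inj. Qed.

Lemma sign_ex : exists g : W -> UT int,
  (forall x y, Waff x -> Waff y -> g (x * y)%g = (g x * g y)%g) /\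
  (forall s, S s -> g s = sig1).
Proof.
case: sub => _ _ _ h; apply: (h _ (fun _ => sig1)) => s t m _ _ _.
by rewrite sig1_sq expg1n.
Qed.

Lemma lenS s x : S s -> Waff x -> len (s * x)%g = (len x).+1 \/ len x = (len (s * x)%g).+1.
Proof.
move=> hs hx; case: sign_ex => g [gM gS].
have hsw : Waff s by case: (S_prop hs).
have gw : forall l, all S l -> g (wprod l) = (sig1 ^+ size l)%g.
  elim=> [|y l IH] /=.
    by move=> _; rewrite wprod_nil; apply: (@mulIg _ (g 1%g)); rewrite -gM ?mulg1 ?mul1g //; apply: Waff1.
  move=> /andP[hy hl]; rewrite wprod_cons gM ?IH ?gS ?expgS //.
    by case: (S_prop hy).
  by apply: wprod_in.
have gl : forall y, Waff y -> g y = (sig1 ^+ len y)%g.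
  by move=> y hy; case: (red hy) => l [hl -> <-]; apply: gw.
have hsx : Waff (s * x)%g by apply: WaffM.
have e1 := lenS_le hs hx.
have e2 : len x <= (len (s * x)%g).+1.
  have [_ _ ss] := S_prop hs.
  have := lenS_le hs hsx; by rewrite mulgA ss mul1g.
have ne : len (s * x)%g <> len x.
  move=> e; have := gl _ hsx; rewrite gM // gS // (gl x hx) e => h.
  by apply: sig1_neq; apply: (@mulIg _ (sig1 ^+ len x)%g); rewrite mul1g.
lia.
Qed.

Lemma len_Om u : Om u -> len u = 0.
Proof. by move=> hu; rewrite -(mul1g u) (ec_len_Om HW) ?len1 //; apply: Waff1. Qed.

Lemma Om1 : Om 1%g. Proof. by case: (ec_Om HW). Qed.
Lemma OmV u : Om u -> Om u^-1%g. Proof. by case: (ec_Om HW) => _ [_]; auto. Qed.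
Lemma OmM u v : Om u -> Om v -> Om (u * v)%g. Proof. by case: (ec_Om HW) => _ []; auto. Qed.

Lemma len_conj_le x v : Waff x -> Om v -> len (x ^ v)%g <= len x.
Proof.
move=> hx hv; case: (red hx) => l [hl -> <-].
rewrite -(size_map (fun y => y ^ v)%g).
apply: len_le.
- by apply: (ec_normal HW); apply: wprod_in.
- by apply/allP => y /mapP [z hz ->]; apply: (ec_OmS HW) => //; apply: (allP hl).
- by rewrite /wprod conjg_prod big_map.
Qed.

Lemma len_conj x v : Waff x -> Om v -> len (x ^ v)%g = len x.
Proof.
move=> hx hv; apply/eqP; rewrite eqn_leq len_conj_le //=.
have -> : len x = len ((x ^ v) ^ v^-1)%g by rewrite conjgK.
by apply: len_conj_le; [apply: (ec_normal HW) | apply: OmV].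
Qed.

Lemma len_mul0 y z : len y = 0 -> len (y * z)%g = len z.
Proof.
move=> hy; case: (ec_prod HW y) => x [u [hx [hu ey]]].
have x1 : x = 1%g by apply: len0 => //; rewrite -hy ey (ec_len_Om HW).
case: (ec_prod HW z) => x' [u' [hx' [hu' ez]]].
have -> : (y * z)%g = ((x' ^ u^-1) * (u * u'))%g.
  by rewrite ey ez x1 mul1g conjgE invgK !mulgA mulgVK.
have hc : Waff (x' ^ u^-1)%g by apply: (ec_normal HW).
have huu : Om (u * u')%g by apply: OmM.
rewrite ez (ec_len_Om HW hc huu) (ec_len_Om HW hx' hu') len_conj //.
by apply: OmV.
Qed.

Lemma len0V y : len y = 0 -> len y^-1%g = 0.
Proof.
move=> hy; case: (ec_prod HW y) => x [u [hx [hu ey]]].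
have x1 : x = 1%g by apply: len0 => //; rewrite -hy ey (ec_len_Om HW).
by rewrite ey x1 mul1g len_Om //; apply: OmV.
Qed.

Lemma lenSW s w : S s -> len (s * w)%g = (len w).+1 \/ len w = (len (s * w)%g).+1.
Proof.
move=> hs; case: (ec_prod HW w) => x [u [hx [hu ->]]].
have hsx : Waff (s * x)%g by apply: WaffM => //; case: (S_prop hs).
by rewrite mulgA (ec_len_Om HW hsx hu) (ec_len_Om HW hx hu); apply: lenS.
Qed.

Lemma decomp w : 0 < len w -> exists s w', [/\ S s, w = (s * w')%g & len w = (len w').+1].
Proof.
case: (ec_prod HW w) => x [u [hx [hu ->]]].
rewrite (ec_len_Om HW hx hu); case: (red hx) => l0 [hl ex el].
case: l0 hl ex el => [|s l] hl ex el; first by rewrite -el.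
move=> _; move: hl => /= /andP[hs hl].
have hl' := wprod_in hl.
exists s, (wprod l * u)%g; split=> //; first by rewrite ex wprod_cons mulgA.
rewrite (ec_len_Om HW hl' hu).
have e1 : len (wprod l) <= size l by apply: len_le.
have e2 : len x <= (len (wprod l)).+1 by rewrite ex wprod_cons; apply: lenS_le.
rewrite -el /=; rewrite -el /= in e2; lia.
Qed.
End Coxeter.


Section Main.
Variables (R : comPzRingType) (W : groupType) (Waff Om S : pred W) (len : W -> nat).
Hypothesis HW : extended_coxeter Waff Om S len.
Variables (W1 : groupType) (pi : W1 -> W) (n : W -> W1).
Hypothesis HW1 : prop_coxeter S pi n.
Variables (a : W -> R) (b : W -> seq (R * W1)).
Hypothesis Hab : hecke_params S pi n a b.
Variables (H : algType R) (Th : W1 -> H).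
Hypothesis HH : is_hecke_algebra S len pi n a b Th.
Hypothesis Ha : forall s, S s -> exists u : R, (a s * u)%R = 1%R.
Variables (A : groupType) (tau : W1 -> A).
Hypothesis HA : is_braid_group len pi tau.

Local Open Scope ring_scope.
Notation l1 w := (len (pi w)).

Lemma piM x y : pi (x * y)%g = (pi x * pi y)%g. Proof. exact: (pc_hom HW1). Qed.
Lemma pi1 : pi 1%g = 1%g. Proof. exact: ghom1 (pc_hom HW1). Qed.
Lemma piV x : pi x^-1%g = (pi x)^-1%g. Proof. exact: ghomV (pc_hom HW1). Qed.

Lemma l1_1 : l1 1%g = 0%N. Proof. rewrite pi1. exact: (len1 HW). Qed.

Lemma lenS1 s : S s -> len s = 1%N.
Proof. by move=> hs; case: (lenSW HW 1%g hs); rewrite mulg1 (len1 HW). Qed.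

Lemma l1_n s : S s -> l1 (n s) = 1%N.
Proof. by move=> hs; rewrite (pc_lift HW1 hs) lenS1. Qed.

Lemma l1_mul0 u w : l1 u = 0%N -> l1 (u * w)%g = l1 w.
Proof. by move=> h; rewrite piM (len_mul0 HW) . Qed.

Lemma l1_V0 u : l1 u = 0%N -> l1 u^-1%g = 0%N.
Proof. by move=> h; rewrite piV (len0V HW). Qed.

Lemma ThM w w' : l1 (w * w')%g = (l1 w + l1 w')%N -> Th (w * w')%g = Th w * Th w'.
Proof. by case: HH => _ _ h _; apply: h. Qed.

Lemma tauM w w' : l1 (w * w')%g = (l1 w + l1 w')%N -> tau (w * w')%g = (tau w * tau w')%g.
Proof. by case: HA => h _ _; apply: h. Qed.

Lemma ThM0 u w : l1 u = 0%N -> Th (u * w)%g = Th u * Th w.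
Proof. by move=> h; apply: ThM; rewrite l1_mul0 // h. Qed.
Lemma tauM0 u w : l1 u = 0%N -> tau (u * w)%g = (tau u * tau w)%g.
Proof. by move=> h; apply: tauM; rewrite l1_mul0 // h. Qed.

Lemma Th1 : Th 1%g = 1.
Proof.
have hl : forall w, Th 1%g * Th w = Th w by move=> w; rewrite -ThM0 ?mul1g // l1_1.
case: HH => _ hs _ _; case: (hs 1) => l [c e].
by rewrite -[Th 1%g]mulr1 e mulr_sumr; apply: eq_bigr => w _; rewrite -scalerAr hl.
Qed.

Lemma tau1 : tau 1%g = 1%g.
Proof.
apply: (@mulIg _ (tau 1%g)); rewrite mul1g -tauM; first by rewrite mulg1.
by rewrite mulg1 l1_1.
Qed.

Lemma decompW1 w : (0 < l1 w)%N -> exists s w',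
  [/\ S s, w = (n s * w')%g, l1 w = (l1 w').+1,
      Th w = Th (n s) * Th w' & tau w = (tau (n s) * tau w')%g].
Proof.
move=> /(decomp HW) [s [w'' [hs e el]]].
exists s, ((n s)^-1 * w)%g.
have e' : pi ((n s)^-1 * w)%g = w''.
  have [_ _ ss] := S_prop HW hs.
  by rewrite piM piV (pc_lift HW1 hs) (SV HW hs) e mulgA ss mul1g.
have hw : w = (n s * ((n s)^-1 * w))%g by rewrite mulVKg.
have el' : l1 w = (l1 (n s) + l1 ((n s)^-1 * w)%g)%N by rewrite e' l1_n // el.
split=> //; first by rewrite e'.
  by rewrite {1}hw ThM -?hw.
by rewrite {1}hw tauM -?hw.
Qed.

Lemma Th_len0_inv u : l1 u = 0%N -> Th u * Th u^-1%g = 1 /\ Th u^-1%g * Th u = 1.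
Proof.
move=> h; split; first by rewrite -ThM0 // mulgV Th1.
by rewrite -ThM0 ?mulVg ?Th1 // l1_V0.
Qed.

Lemma b_len0 s p : S s -> p \in b s -> pi p.2 = 1%g.
Proof. by case: Hab => h _ hs hp; apply: h hs _ hp. Qed.

Lemma l1_nn s : S s -> l1 (n s * n s)%g = 0%N.
Proof. by move=> hs; have [_ _ ss] := S_prop HW hs; rewrite piM (pc_lift HW1 hs) ss (len1 HW). Qed.

Lemma NB s : S s -> Th (n s) * lin_ext Th (b s) = lin_ext Th (b s) * Th (n s).
Proof.
move=> hs.
have -> : Th (n s) * lin_ext Th (b s) = lin_ext Th (gmul [:: (1, n s)] (b s)).
  rewrite gmul1l /lin_ext big_map mulr_sumr; apply: eq_big_seq => p hp /=.
  by rewrite mul1r -scalerAr ThM // piM (b_len0 hs hp) mulg1 (len1 HW) addn0.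
have -> : lin_ext Th (b s) * Th (n s) = lin_ext Th (gmul (b s) [:: (1, n s)]).
  rewrite gmul1r /lin_ext big_map mulr_suml; apply: eq_big_seq => p hp /=.
  by rewrite mulr1 -scalerAl ThM // piM (b_len0 hs hp) mul1g (len1 HW).
apply: lin_coef_eq => x; rewrite coef_gmul1l coef_gmul1r mul1r mulr1.
have hc : coef (b s) =1 coef (gmul (gmul [:: (1, n s)] (b s)) [:: (1, (n s)^-1%g)]).
  case: Hab => _ h; have hsn : (s * pi (n s))%g = (pi (n s) * s)%g by rewrite (pc_lift HW1 hs).
  have [_ ] := h s s (n s) hs hs hsn.
  move=> e y; rewrite e; congr (coef _ y).
  rewrite gmul1r gmul1l -map_comp; apply: eq_map => p /=.
  by rewrite mul1r mulr1 -(mulgA (n s) (n s)) mulgV mulg1 mulgV mul1g.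
by rewrite [RHS]hc coef_gmul1r coef_gmul1l mul1r mulr1 invgK mulgVK.
Qed.

Lemma Tns_inv s : S s -> exists y, Th (n s) * y = 1 /\ y * Th (n s) = 1.
Proof.
move=> hs; case: (Ha hs) => u hu.
set N := Th (n s); set M := Th (n s * n s)%g; set Mi := Th (n s * n s)^-1%g.
set B := lin_ext Th (b s).
have quad : N * N = a s *: M + N * B by case: HH => _ _ _ h; apply: h.
have [MMi MiM] := Th_len0_inv (l1_nn hs).
have NMi : Mi * N = N * Mi.
  have e1 : ((n s * n s)^-1 * n s)%g = (n s)^-1%g by rewrite invgM mulgVK.
  have e2 : (n s * (n s * n s)^-1)%g = (n s)^-1%g by rewrite invgM mulgA mulgV mul1g.
  rewrite /Mi /N -ThM0 ?l1_V0 ?l1_nn // -ThM; first by rewrite e1 e2.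
  rewrite l1_V0 ?l1_nn // addn0 l1_n // e2 piV (pc_lift HW1 hs) (SV HW hs).
  by rewrite lenS1.
have key : N * (N - B) = a s *: M by rewrite mulrBr quad addrK.
have key' : (N - B) * N = a s *: M by rewrite mulrBl -NB // quad addrK.
exists (u *: ((N - B) * Mi)); split.
  by rewrite -scalerAr mulrA key -scalerAl MMi scalerA mulrC hu scale1r.
by rewrite -scalerAl -mulrA NMi mulrA key' -scalerAl MMi scalerA mulrC hu scale1r.
Qed.

Lemma Th_inv w : exists y, Th w * y = 1 /\ y * Th w = 1.
Proof.
have : forall k w, (l1 w <= k)%N -> exists y, Th w * y = 1 /\ y * Th w = 1; last by apply; apply: leqnn.
elim=> [|k IH] {}w hk.
  by exists (Th w^-1%g); apply: Th_len0_inv; apply/eqP; rewrite -leqn0.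
case: (posnP (l1 w)) => hw.
  by exists (Th w^-1%g); apply: Th_len0_inv.
case: (decompW1 hw) => s [w' [hs _ el -> _]].
case: (Tns_inv hs) => y1 [h1 h2].
have [y2 [h3 h4]] : exists y, Th w' * y = 1 /\ y * Th w' = 1 by apply: IH; lia.
exists (y2 * y1); split.
  by rewrite mulrA -(mulrA (Th (n s))) h3 mulr1 h1.
by rewrite mulrA -(mulrA y2) h2 mulr1 h4.
Qed.

Definition gen := quad_gen n a b tau.
Notation Jm := (@J R A W (fun s => S s) gen).
Definition tl (g : seq (R * W1)) : seq (R * A) := [seq (p.1, tau p.2) | p <- g].
Definition Q (f : seq (R * A)) := exists g, Jm (f ++ negl (tl g)).

Lemma Q_eq f f' : coef f =1 coef f' -> Q f -> Q f'.
Proof.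
move=> e [g hg]; exists g; apply: (J_eq hg) => x.
by rewrite !coef_cat e.
Qed.

Lemma Q_tl g : Q (tl g).
Proof. by exists g; apply: J_zero => x; rewrite coef_cat coef_neg subrr. Qed.

Lemma Q_cat f1 f2 : Q f1 -> Q f2 -> Q (f1 ++ f2).
Proof.
move=> [g1 h1] [g2 h2]; exists (g1 ++ g2).
apply: (J_eq (J_cat h1 h2)) => x.
have e1 : tl (g1 ++ g2) = tl g1 ++ tl g2 by rewrite /tl map_cat.
have e2 : forall u v : seq (R * A), negl (u ++ v) = negl u ++ negl v.
  by move=> u v; rewrite /negl map_cat.
rewrite e1 e2 !coef_cat !coef_neg; ring.
Qed.

Lemma Q_trans f h : Jm (f ++ negl h) -> Q h -> Q f.
Proof.
move=> hf [g hg]; exists g; apply: (J_eq (J_cat hf hg)) => x.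
rewrite !coef_cat !coef_neg; ring.
Qed.

Lemma Q_mull1 y f : Q f -> (forall g, Q (gmul [:: (1, y)] (tl g))) ->
  Q (gmul [:: (1, y)] f).
Proof.
move=> [g hg] hy; apply: (Q_trans (h := gmul [:: (1, y)] (tl g))) => //.
apply: (J_eq (J_mull 1 y hg)); move=> x.
rewrite [coef (_ ++ negl (gmul _ _)) x]coef_cat coef_neg !coef_gmul1l coef_cat coef_neg !mul1r. by [].
Qed.

Definition CL y := forall g, Q (gmul [:: (1, y)] (tl g)).

Lemma CL_single y : (forall c w, Q [:: (c, (y * tau w)%g)]) -> CL y.
Proof.
move=> h; elim=> [|[c w] g IH].
  by rewrite gmul1l; apply: (Q_tl [::]).
rewrite gmul1l /= mul1r -cat1s; apply: Q_cat => //.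
by move: IH; rewrite gmul1l.
Qed.

Lemma CL_mul y z : CL y -> CL z -> CL (y * z)%g.
Proof.
move=> hy hz g; apply: (@Q_eq (gmul [:: (1, y)] (gmul [:: (1, z)] (tl g)))).
  by move=> x; rewrite !coef_gmul1l !mul1r invgM mulgA.
by apply: Q_mull1.
Qed.

Lemma CL_1 : CL 1%g.
Proof.
move=> g; apply: (@Q_eq (tl g)); last exact: Q_tl.
by move=> x; rewrite coef_gmul1l mul1r invg1 mul1g.
Qed.

Definition Gp y := CL y /\ CL y^-1%g.

Lemma Gp_mul y z : Gp y -> Gp z -> Gp (y * z)%g.
Proof. by move=> [h1 h2] [h3 h4]; split; [apply: CL_mul | rewrite invgM; apply: CL_mul]. Qed.

Lemma Gp_inv y : Gp y -> Gp y^-1%g.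
Proof. by move=> [h1 h2]; split; rewrite ?invgK. Qed.

Lemma Gp_1 : Gp 1%g.
Proof. by split; rewrite ?invg1; apply: CL_1. Qed.

Lemma CL_len0 u : l1 u = 0%N -> CL (tau u).
Proof.
move=> hu; apply: CL_single => c w.
by rewrite -tauM0 //; apply: (Q_tl [:: (c, (u * w)%g)]).
Qed.

Lemma Gp_len0 u : l1 u = 0%N -> Gp (tau u).
Proof.
move=> hu; split; first exact: CL_len0.
have -> : (tau u)^-1%g = tau u^-1%g.
  by apply: mulg1_eq; rewrite -tauM0 // mulgV tau1.
by apply: CL_len0; apply: l1_V0.
Qed.

Lemma coef_cons' (c : R) (y : A) l x : coef ((c, y) :: l) x = (y == x)%:R * c + coef l x.
Proof. by rewrite coef_cons; case: eqP; rewrite ?mul1r ?mul0r. Qed.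

Lemma l1_b s p : S s -> p \in b s -> l1 p.2 = 0%N.
Proof. by move=> hs hp; rewrite (b_len0 hs hp) (len1 HW). Qed.

Lemma CL_n s : S s -> CL (tau (n s)).
Proof.
move=> hs; apply: CL_single => c w.
case: (lenSW HW (pi w) hs) => e.
  rewrite -tauM; first exact: (Q_tl [:: (c, (n s * w)%g)]).
  by rewrite piM (pc_lift HW1 hs) e (lenS1 hs).
set w' := ((n s)^-1 * w)%g.
have pw' : pi w' = (s * pi w)%g by rewrite piM piV (pc_lift HW1 hs) (SV HW hs).
have hw : w = (n s * w')%g by rewrite /w' mulVKg.
have el : l1 w = (l1 w').+1 by rewrite pw' e.
have tw : tau w = (tau (n s) * tau w')%g.
  by rewrite {1}hw tauM // -hw el l1_n.
clearbody w'.
have J1 := J_mulr c (tau w') (@J_gen R A W (fun s => S s) gen s hs).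
exists ((a s * c, (n s * n s * w')%g) :: [seq (p.1 * c, (n s * p.2 * w')%g) | p <- b s]).
apply: (J_eq J1) => x; congr (coef _ x).
rewrite gmul1r /gen /quad_gen /= /negl /tl -!map_comp.
congr (_ :: _ :: _).
- by rewrite mul1r tw mulgA.
- by rewrite mulNr -tauM0 // l1_nn.
apply/eq_in_map => p hp /=; rewrite mulNr; congr (_, _).
have hp0 := l1_b hs hp.
rewrite -(mulgA (n s)) tauM; first by rewrite (@tauM0 p.2 w' hp0) mulgA.
rewrite (@l1_mul0 p.2 w' hp0) l1_n // add1n -el piM (piM p.2) (b_len0 hs hp) mul1g.
by rewrite -piM -hw.
Qed.

Lemma CL_ninv s : S s -> CL (tau (n s))^-1%g.
Proof.
move=> hs; apply: CL_single => c w.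
case: (Ha hs) => u hu.
set N := tau (n s).
set v := ((n s * n s)^-1 * w)%g.
have tv : (tau (n s * n s) * tau v)%g = tau w by rewrite -tauM0 ?l1_nn // /v mulVKg.
clearbody v.
set g1 := [seq (p.1 * c * u, (p.2 * v)%g) | p <- b s].
have J1 := J_mull 1 N^-1 (J_mulr (- (c * u)) (tau v) (@J_gen R A W (fun s => S s) gen s hs)).
have eX : gmul [:: (1, N^-1%g)] (gmul (gen s) [:: (- (c * u), tau v)]) =
    (- (c * u), (N * tau v)%g) :: (c, (N^-1 * tau w)%g) :: tl g1.
  rewrite gmul1r gmul1l /gen /quad_gen /= /tl /g1 -!map_comp.
  congr (_ :: _ :: _).
  - by rewrite !mul1r -mulgA mulKg.
  - by rewrite mul1r mulrNN mulrCA hu mulr1 tv.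
  apply/eq_in_map => p hp /=.
  by rewrite mul1r mulrNN mulrA -mulgA mulKg (@tauM0 p.2 v (l1_b hs hp)).
rewrite eX in J1.
apply: (Q_trans (h := [:: (c * u, (N * tau v)%g)] ++ negl (tl g1))).
  apply: (J_eq J1) => x.
  rewrite /= !coef_cons' !coef_neg opprK; ring.
apply: Q_cat.
  apply: (@Q_eq (gmul [:: (1, N)] (tl [:: (c * u, v)]))); last exact: CL_n.
  by move=> x; rewrite gmul1l /= mul1r.
have -> : negl (tl g1) = tl [seq (- p.1, p.2) | p <- g1] by rewrite /negl /tl -!map_comp.
exact: Q_tl.
Qed.

Lemma Gp_n s : S s -> Gp (tau (n s)).
Proof. by move=> hs; split; [apply: CL_n | apply: CL_ninv]. Qed.

Lemma Gp_tau w : Gp (tau w).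
Proof.
have : forall k w, (l1 w <= k)%N -> Gp (tau w); last by apply; apply: leqnn.
elim=> [|k IH] {}w hk.
  by apply: Gp_len0; apply/eqP; rewrite -leqn0.
case: (posnP (l1 w)) => hw; first exact: Gp_len0.
case: (decompW1 hw) => s [w' [hs _ el _ ->]].
by apply: Gp_mul; [apply: Gp_n | apply: IH; lia].
Qed.

Lemma Gp_all x : Gp x.
Proof.
case: HA => _ hgen _; case: (hgen x) => l ->.
elim: l => [|[[] w] l IH]; rewrite /= ?wprod_nil ?wprod_cons; first exact: Gp_1.
  by apply: Gp_mul => //; apply: Gp_inv; apply: Gp_tau.
by apply: Gp_mul => //; apply: Gp_tau.
Qed.

Lemma Q_all f : Q f.
Proof.
elim: f => [|[c x] f IH]; first exact: (Q_tl [::]).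
rewrite -cat1s; apply: Q_cat => //.
apply: (@Q_eq (gmul [:: (1, x)] (tl [:: (c, 1%g)]))); last by case: (Gp_all x).
by move=> y; rewrite gmul1l /= mul1r tau1 mulg1.
Qed.

Lemma exU w : exists y, unitP (Th w, y).
Proof.
by case: (Th_inv w) => y [h1 h2]; exists y; rewrite /unitP /= h1 h2 eqxx.
Qed.

Definition fU w : UT H :=
  exist (fun x => unitP x) (Th w, xchoose (exU w)) (xchooseP (exU w)).

Lemma UT_eq1 (x y : UT H) : (sval x).1 = (sval y).1 -> x = y.
Proof.
case: x => [[x1 x2] hx]; case: y => [[y1 y2] hy] /= e; apply: val_inj => /=.
move: hx hy; rewrite /unitP /= e => /andP[/eqP h1 /eqP h2] /andP[/eqP h3 /eqP h4].
by rewrite -[x2]mulr1 -h3 mulrA h2 mul1r.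
Qed.

Lemma iota_ex : exists g : A -> UT H, ghom g /\ forall w, g (tau w) = fU w.
Proof.
case: HA => _ _ h; apply: h => w w' e; apply: UT_eq1 => /=.
exact: ThM.
Qed.

Lemma lin_negl (F : A -> H) l : lin_ext F (negl l) = - lin_ext F l.
Proof. by rewrite /lin_ext big_map -sumrN; apply: eq_bigr => p _; rewrite scaleNr. Qed.

Lemma main_sec : exists iota : A -> H,
    [/\ forall x y : A, iota (x * y)%g = (iota x * iota y)%R,
        iota 1%g = 1%R,
        forall w : W1, iota (tau w) = Th w,
        forall h : H, exists f : seq (R * A), lin_ext iota f = h &
        forall f : seq (R * A),
          lin_ext iota f = 0%R <->
          in_ideal (fun s => S s) (quad_gen n a b tau) f].
Proof.
case: iota_ex => g [gh gt].
set iota := fun x => (sval (g x)).1.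
have iM : forall x y : A, iota (x * y)%g = (iota x * iota y)%R.
  by move=> x y; rewrite /iota gh.
have iT : forall w, iota (tau w) = Th w by move=> w; rewrite /iota gt.
have lgen : forall s, S s -> lin_ext iota (gen s) = 0.
  move=> s hs; rewrite /gen /quad_gen /= !lin_cons /lin_ext big_map /=.
  have quad : Th (n s) * Th (n s) =
      a s *: Th (n s * n s)%g + Th (n s) * lin_ext Th (b s) by case: HH => _ _ _ h; apply: h.
  rewrite iM !iT scale1r quad /lin_ext mulr_sumr.
  under [X in _ + (_ + X)]eq_bigr => p _ do rewrite iM !iT scaleNr scalerAr.
  by rewrite sumrN scaleNr addrACA subrr add0r subrr.
have fwd : forall f, Jm f -> lin_ext iota f = 0.
  move=> f [l [hl hc]]; rewrite (lin_coef_eq iota hc) lin_flatten big_map.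
  rewrite big1_seq // => e /andP[_ he].
  by rewrite !(lin_gmul iM) lgen ?mulr0 ?mul0r //; apply: hl.
exists iota; split=> //.
- by rewrite /iota (ghom1 gh).
- move=> h; case: HH => _ hs _ _; case: (hs h) => l [c ->].
  exists [seq (c w, tau w) | w <- l]; rewrite /lin_ext big_map.
  by apply: eq_bigr => w _ /=; rewrite iT.
move=> f; split; last exact: fwd.
move=> h0; case: (Q_all f) => g0 hJ.
have L0 := fwd _ hJ; rewrite lin_cat lin_negl h0 add0r in L0.
move/eqP: L0; rewrite oppr_eq0 => /eqP L0.
set K := undup [seq p.2 | p <- g0].
have hK : forall p, p \in g0 -> p.2 \in K by move=> p hp; rewrite mem_undup; apply: map_f.
have L1 : \sum_(w <- K) coef g0 w *: Th w = 0.
  rewrite -(lin_coef Th (undup_uniq _) hK) -L0 /lin_ext /tl big_map.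
  by apply: eq_bigr => p _ /=; rewrite iT.
have c0 : forall w, w \in K -> coef g0 w = 0.
  by case: HH => hi _ _ _; apply: (hi K (coef g0) (undup_uniq _) L1).
apply: (J_eq hJ) => x; rewrite coef_cat coef_neg.
have -> : coef (tl g0) x = 0.
  rewrite /coef /tl big_map /=.
  rewrite (sum_coef (fun w => tau w == x) (undup_uniq _) hK).
  by rewrite big1_seq // => w /andP[_ hw]; apply: c0.
by rewrite oppr0 addr0.
Qed.
End Main.



Theorem proposition2p4p3
  (R : comPzRingType)
  (* extended Coxeter group W = Waff ⋊ Ω with length len *)
  (W : groupType) (Waff Om S : pred W) (len : W -> nat)
  (HW : extended_coxeter Waff Om S len)
  (* pro-p Coxeter group W1 -> W with lifts n_s *)
  (W1 : groupType) (pi : W1 -> W) (n : W -> W1)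
  (HW1 : prop_coxeter S pi n)
  (* parameters and the generic pro-p Hecke algebra H = H^(1)_R(a,b) *)
  (a : W -> R) (b : W -> seq (R * W1))
  (Hab : hecke_params S pi n a b)
  (H : algType R) (Th : W1 -> H)
  (HH : is_hecke_algebra S len pi n a b Th)
  (* all a_s are units of R *)
  (Ha : forall s, S s -> exists u : R, (a s * u)%R = 1%R)
  (* the group 𝔄(W^(1)) *)
  (A : groupType) (tau : W1 -> A)
  (HA : is_braid_group len pi tau) :
  (* the map T_w |-> T_w induces a well defined R-algebra homomorphism
     phi : R[A]/𝔞 -> H (via a group hom iota : A -> H^×), which is an
     isomorphism: surjective, with kernel of R[A] -> H exactly 𝔞 *)
  exists iota : A -> H,
    [/\ forall x y : A, iota (x * y)%g = (iota x * iota y)%R,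
        iota 1%g = 1%R,
        forall w : W1, iota (tau w) = Th w,
        forall h : H, exists f : seq (R * A), lin_ext iota f = h &
        forall f : seq (R * A),
          lin_ext iota f = 0%R <->
          in_ideal (fun s => S s) (quad_gen n a b tau) f].
Proof. exact: (main_sec HW HW1 Hab HH Ha HA). Qed.
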